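(* Consider the system $u_{n+1,x}^j = F^j(x,n,u_{n,x}^j,u_n,u_{n+1})$, $j=1,\dots,N$, with analytic $F^j$, which can be uniquely rewritten as $u_{n-1,x}^j=G^j(x,n,u_{n,x}^j,u_n,u_{n-1})$. Let $$K=\sum_{j=1}^{N}\sum_{k=1}^{\infty}\left(\alpha^j(k)\frac{\partial}{\partial u^j_{n+k}}+\alpha^j(-k)\frac{\partial}{\partial u^j_{n-k}}\right)$$ be a vector field whose coefficients $\alpha^j(\pm k)$ are functions of the dynamical variables. If $K$ satisfies $$D_nKD_n^{-1}=hK$$ for some function $h$ of the dynamical variables, then $K=0$.
   Context: The dynamical variables are $u^j_n,u^j_{n\pm1},u^j_{n\pm2},\dots$ and $u^j_{n,x},u^j_{n,xx},\dots$ ($1\le j\le N$), treated as independent. $D_n$ is the shift operator $D_n y(n)=y(n+1)$ acting on functions of the dynamical variables, where shifted $x$-derivatives are expressed through the system (e.g. $D_n u_{n,x}^j=F^j$, $D_n^{-1}u^j_{n,x}=G^j$); $D_nKD_n^{-1}$ denotes the conjugated operator acting on such functions. *)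

(* Defs.v *)
From Stdlib Require Import Reals ZArith List.
From Coquelicot Require Import Coquelicot.
Open Scope R_scope.

(** * Coordinates of the jet space
    VX      : the independent variable x
    VU j m  : u^j_{n+m}            (m : Z)
    VD j i  : u^j_{n, x^(i+1)}      i.e. the (i+1)-th x-derivative of u^j_n
    Indices j >= N are never used by admissible functions. *)
Inductive var : Type :=
| VX : var
| VU : nat -> Z -> var
| VD : nat -> nat -> var.

Definition var_eq_dec : forall v v' : var, {v = v'} + {v <> v'}.
Proof. decide equality; first [apply Nat.eq_dec | apply Z.eq_dec]. Defined.

Definition pt := var -> R.
(** A function of (n, x, dynamical variables). *)
Definition fn := Z -> pt -> R.

Definition upd (w : pt) (v : var) (t : R) : pt :=
  fun v' => if var_eq_dec v v' then t else w v'.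

Definition dpart (g : pt -> R) (v : var) (w : pt) : R :=
  Derive (fun t => g (upd w v t)) (w v).

Definition mset (a : var -> nat) (v : var) (e : nat) : var -> nat :=
  fun v' => if var_eq_dec v v' then e else a v'.

Fixpoint box_sum (L : list var) (K : nat) (c : (var -> nat) -> R) (y : pt) : R :=
  match L with
  | nil => c (fun _ => 0%nat)
  | v :: L' => sum_f_R0 (fun e => y v ^ e * box_sum L' K (fun a => c (mset a v e)) y) K
  end.

Definition analytic_on (P : var -> Prop) (g : pt -> R) : Prop :=
  exists L : list var,
    NoDup L /\ (forall v, In v L -> P v) /\
    (forall w w', (forall v, In v L -> w v = w' v) -> g w = g w') /\
    forall w, exists r, 0 < r /\ exists c : (var -> nat) -> R,
      forall w', (forall v, In v L -> Rabs (w' v - w v) < r) ->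
        is_lim_seq (fun K => box_sum L K c (fun v => w' v - w v)) (Finite (g w')) /\
        exists B, forall K,
          box_sum L K (fun a => Rabs (c a)) (fun v => Rabs (w' v - w v)) <= B.

(** Admissible coordinates: dynamical variables with 1 <= j <= N (indices 0..N-1). *)
Definition dyn_var (N : nat) (v : var) : Prop :=
  match v with
  | VX => False
  | VU j _ => (j < N)%nat
  | VD j _ => (j < N)%nat
  end.

Definition dynx_var (N : nat) (v : var) : Prop :=
  match v with
  | VX => True
  | _ => dyn_var N v
  end.

Definition dyn_fun (N : nat) (g : pt -> R) : Prop := analytic_on (dyn_var N) g.

(** ** The system
    F j x n a u v  stands for  F^j(x, n, u^j_{n,x} = a, u_n = u, u_{n+1} = v);
    G j x n a u v  stands for  G^j(x, n, u^j_{n,x} = a, u_n = u, u_{n-1} = v). *)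
Definition Ftype := nat -> R -> Z -> R -> (nat -> R) -> (nat -> R) -> R.

Definition Ffn (F : Ftype) (j : nat) : fn :=
  fun n w => F j (w VX) n (w (VD j 0)) (fun l => w (VU l 0%Z)) (fun l => w (VU l 1%Z)).
Definition Gfn (G : Ftype) (j : nat) : fn :=
  fun n w => G j (w VX) n (w (VD j 0)) (fun l => w (VU l 0%Z)) (fun l => w (VU l (-1)%Z)).

(** Value of u^j_{n+k,x} (k >= 0) expressed through the system. *)
Fixpoint xpos (F : Ftype) (j : nat) (k : nat) (n : Z) (w : pt) : R :=
  match k with
  | O => w (VD j 0)
  | S k' => F j (w VX) (n + Z.of_nat k')%Z (xpos F j k' n w)
              (fun l => w (VU l (Z.of_nat k'))) (fun l => w (VU l (Z.of_nat k' + 1)%Z))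
  end.
(** Value of u^j_{n-k,x} (k >= 0) expressed through the system. *)
Fixpoint xneg (G : Ftype) (j : nat) (k : nat) (n : Z) (w : pt) : R :=
  match k with
  | O => w (VD j 0)
  | S k' => G j (w VX) (n - Z.of_nat k')%Z (xneg G j k' n w)
              (fun l => w (VU l (- Z.of_nat k')%Z)) (fun l => w (VU l (- Z.of_nat k' - 1)%Z))
  end.

Fixpoint fsum (N : nat) (g : nat -> R) : R :=
  match N with O => 0 | S N' => fsum N' g + g N' end.

Definition Dx (N : nat) (F G : Ftype) (f : fn) : fn :=
  fun n w =>
    dpart (f n) VX w +
    fsum N (fun j =>
      Series (fun k =>
        dpart (f n) (VU j (Z.of_nat k)) w * xpos F j k n w +
        dpart (f n) (VU j (- Z.of_nat (S k))%Z) w * xneg G j (S k) n w) +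
      Series (fun i => dpart (f n) (VD j i) w * w (VD j (S i)))).

Definition Dxn (N : nat) (F G : Ftype) (i : nat) (f : fn) : fn := Nat.iter i (Dx N F G) f.

(** Shift of points induced by D_n and by D_n^{-1}. *)
Definition Sh (N : nat) (F G : Ftype) (n : Z) (w : pt) : pt :=
  fun v => match v with
  | VX => w VX
  | VU j m => w (VU j (m + 1)%Z)
  | VD j i => Dxn N F G i (Ffn F j) n w
  end.
Definition Shinv (N : nat) (F G : Ftype) (n : Z) (w : pt) : pt :=
  fun v => match v with
  | VX => w VX
  | VU j m => w (VU j (m - 1)%Z)
  | VD j i => Dxn N F G i (Gfn G j) n w
  end.

Definition Dn (N : nat) (F G : Ftype) (f : fn) : fn := fun n w => f (n + 1)%Z (Sh N F G n w).
Definition Dninv (N : nat) (F G : Ftype) (f : fn) : fn := fun n w => f (n - 1)%Z (Shinv N F G n w).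

(** The vector field K = sum_j sum_{k>=1} (alpha^j(k) d/du^j_{n+k} + alpha^j(-k) d/du^j_{n-k});
    alpha j m is the coefficient alpha^j(m) (m <> 0; alpha j 0 is unused). *)
Definition Kop (N : nat) (alpha : nat -> Z -> pt -> R) (f : fn) : fn :=
  fun n w => fsum N (fun j =>
    Series (fun k =>
      alpha j (Z.of_nat (S k)) w * dpart (f n) (VU j (Z.of_nat (S k))) w +
      alpha j (- Z.of_nat (S k))%Z w * dpart (f n) (VU j (- Z.of_nat (S k))%Z) w)).

Definition lift (g : pt -> R) : fn := fun _ w => g w.

(* Main.v *)
Require Import Defs.
From Stdlib Require Import Reals ZArith List.
From Coquelicot Require Import Coquelicot.
From Stdlib Require Import Lia Lra Classical FunctionalExtensionality.
Require Import Defs.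
Open Scope R_scope.


Lemma upd_eq w v t : upd w v t v = t.
Proof. unfold upd; destruct (var_eq_dec v v); congruence. Qed.
Lemma upd_neq w v t v' : v <> v' -> upd w v t v' = w v'.
Proof. intros H; unfold upd; destruct (var_eq_dec v v'); congruence. Qed.
Lemma upd_same w v : upd w v (w v) = w.
Proof. apply functional_extensionality; intro v'; unfold upd; destruct (var_eq_dec v v'); congruence. Qed.
Lemma upd_upd_same w v s t : upd (upd w v s) v t = upd w v t.
Proof. apply functional_extensionality; intro v'; unfold upd; destruct (var_eq_dec v v'); congruence. Qed.
Lemma upd_comm w u v s t : u <> v -> upd (upd w u s) v t = upd (upd w v t) u s.
Proof. intro H; apply functional_extensionality; intro v'; unfold upd;
  destruct (var_eq_dec v v'); destruct (var_eq_dec u v'); congruence. Qed.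

Definition dep (S : var -> Prop) (g : pt -> R) : Prop :=
  forall w w', (forall v, S v -> w v = w' v) -> g w = g w'.

Lemma dep_mono (S S' : var -> Prop) g : dep S g -> (forall v, S v -> S' v) -> dep S' g.
Proof. intros H H' w w' E; apply H; intros v Hv; apply E, H', Hv. Qed.

Lemma dpart_dep S g v : dep S g -> S v -> dep S (dpart g v).
Proof.
  intros H Hv w w' E; unfold dpart. rewrite (E v Hv).
  apply Derive_ext; intro t; apply H; intros u Hu.
  destruct (var_eq_dec v u) as [<-|n]; [rewrite !upd_eq; auto| rewrite !upd_neq; auto].
Qed.

Lemma dpart_indep S g v w : dep S g -> ~ S v -> dpart g v w = 0.
Proof.
  intros H Hv; unfold dpart.
  rewrite (Derive_ext _ (fun _ => g w)). apply Derive_const.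
  intro t; apply H; intros u Hu. rewrite upd_neq; auto. intro; subst; auto.
Qed.

Lemma dpart_coord u v w : dpart (fun w => w u) v w = if var_eq_dec v u then 1 else 0.
Proof.
  unfold dpart; destruct (var_eq_dec v u) as [<-|n].
  - rewrite (Derive_ext _ id). apply Derive_id. intro t; rewrite upd_eq; reflexivity.
  - rewrite (Derive_ext _ (fun _ => w u)). apply Derive_const. intro t; rewrite upd_neq; auto.
Qed.

Lemma fsum_ext N a b : (forall j, (j < N)%nat -> a j = b j) -> fsum N a = fsum N b.
Proof. induction N; simpl; intros H; auto. rewrite IHN, H; auto. Qed.
Lemma fsum_plus N a b : fsum N (fun j => a j + b j) = fsum N a + fsum N b.
Proof. induction N; simpl; [lra|]. rewrite IHN; lra. Qed.
Lemma fsum_zero N a : (forall j, (j < N)%nat -> a j = 0) -> fsum N a = 0.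
Proof. induction N; simpl; intros H; auto. rewrite IHN. rewrite H. lra. lia. intros; apply H; lia. Qed.
Lemma fsum_single N a l : (l < N)%nat -> (forall j, j <> l -> a j = 0) -> fsum N a = a l.
Proof.
  induction N; simpl; intros Hl H; [lia|].
  destruct (Nat.eq_dec l N) as [->|n].
  - rewrite fsum_zero; [lra|]. intros j Hj; apply H; lia.
  - rewrite IHN; [|lia|auto]. rewrite (H N); [lra|auto].
Qed.
Lemma fsum_dep S N (a : nat -> pt -> R) : (forall j, dep S (a j)) -> dep S (fun w => fsum N (fun j => a j w)).
Proof. intros H w w' E; apply fsum_ext; intros j _; apply H, E. Qed.

Lemma sumf_first a K : (forall e, (0 < e)%nat -> a e = 0) -> sum_f_R0 a K = a 0%nat.
Proof. intros H; induction K; simpl; auto. rewrite IHK, (H (S K)); [lra|lia]. Qed.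

Lemma sum_single a k0 : (forall k, (k < k0)%nat -> a k = 0) -> sum_f_R0 a k0 = a k0.
Proof.
  intros H. assert (forall K, (K < k0)%nat -> sum_f_R0 a K = 0).
  { induction K; simpl; intros; [apply H; lia| rewrite IHK, (H (S K)); [lra|lia|lia]]. }
  destruct k0; simpl; auto. rewrite H0; [lra|lia].
Qed.

Lemma is_series_of_lim u l : is_lim_seq (fun K => sum_f_R0 u K) (Finite l) -> is_series u l.
Proof.
  intros H. unfold is_series.
  apply (is_lim_seq_ext (fun K => sum_f_R0 u K) (sum_n u)) in H; [exact H|].
  intros n; rewrite sum_n_Reals; reflexivity.
Qed.

Lemma Series_fin a M : (forall i, (M < i)%nat -> a i = 0) -> Series a = sum_f_R0 a M.
Proof.
  intros H. apply is_series_unique, is_series_of_lim.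
  apply is_lim_seq_ext_loc with (fun _ => sum_f_R0 a M); [|apply is_lim_seq_const].
  exists M. intros n Hn. induction n.
  - assert (M = 0%nat) by lia; subst; reflexivity.
  - destruct (Nat.eq_dec M (S n)) as [->|ne]; [reflexivity|].
    simpl. rewrite <- IHn by lia. rewrite (H (S n)); [lra|lia].
Qed.

Lemma Series_single a k0 : (forall k, k <> k0 -> a k = 0) -> Series a = a k0.
Proof.
  intros H. rewrite (Series_fin a k0). apply sum_single; intros; apply H; lia.
  intros; apply H; lia.
Qed.

Lemma Series_zero a : (forall k, a k = 0) -> Series a = 0.
Proof. intros H. rewrite (Series_single a 0); auto. Qed.

Lemma Series_dep S (a : nat -> pt -> R) : (forall k, dep S (a k)) -> dep S (fun w => Series (fun k => a k w)).
Proof. intros H w w' E; apply Series_ext; intro k; apply H, E. Qed.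


Definition LPS (phi : R -> R) (t0 : R) : Prop :=
  exists r, 0 < r /\ exists d, Rbar_le (Finite r) (CV_radius d) /\
    forall t, Rabs (t - t0) < r -> phi t = PSeries d (t - t0).

Lemma ball_R (x e y : R) : ball x e y <-> Rabs (y - x) < e.
Proof. reflexivity. Qed.

Lemma LPS_ex_derive phi t0 : LPS phi t0 -> ex_derive phi t0.
Proof.
  intros (r & Hr & d & Hd & H).
  apply (ex_derive_ext_loc (fun t => PSeries d (t - t0))).
  - exists (mkposreal r Hr). intros y Hy. apply ball_R in Hy. simpl in Hy. symmetry; apply H; auto.
  - apply (ex_derive_comp (PSeries d) (fun t => t - t0)).
    + replace (t0 - t0) with 0 by ring. apply ex_derive_PSeries.
      rewrite Rabs_R0. eapply Rbar_lt_le_trans; [|exact Hd]. simpl; auto.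
    + apply (ex_derive_minus (fun t => t) (fun _ => t0)); [apply ex_derive_id|apply ex_derive_const].
Qed.

Lemma cont_nz (f : R -> R) t0 : continuous f t0 -> f t0 <> 0 ->
  exists d, 0 < d /\ forall s, Rabs (s - t0) < d -> f s <> 0.
Proof.
  intros Hc Hn.
  assert (He : 0 < Rabs (f t0)) by (apply Rabs_pos_lt; auto).
  destruct (proj1 (filterlim_locally f (f t0)) Hc (mkposreal _ He)) as [[e He'] Hb].
  exists e; split; auto. intros s Hs Hfs.
  specialize (Hb s). assert (ball t0 e s) by (apply ball_R; auto).
  specialize (Hb H). change (Rabs (f s - f t0) < Rabs (f t0)) in Hb. rewrite Hfs in Hb.
  rewrite Rminus_0_l, Rabs_Ropp in Hb. lra.
Qed.

Lemma CZ (f : R -> R) sg dl : continuous f 0 -> (sg = 1 \/ sg = -1) -> 0 < dl ->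
  (forall x, 0 < x < dl -> f (sg * x) = 0) -> f 0 = 0.
Proof.
  intros Hc Hs Hd H. apply NNPP; intro Hn.
  destruct (cont_nz f 0 Hc Hn) as (e & He & Hb).
  set (x := Rmin e dl / 2).
  assert (0 < Rmin e dl) by (apply Rmin_glb_lt; auto).
  assert (0 < x) by (unfold x; lra).
  assert (x < dl) by (unfold x; pose proof (Rmin_r e dl); lra).
  assert (x < e) by (unfold x; pose proof (Rmin_l e dl); lra).
  apply (Hb (sg * x)). rewrite Rminus_0_r, Rabs_mult.
  destruct Hs as [-> | ->]; rewrite ?Rabs_R1, ?Rabs_m1, Rabs_pos_eq; lra.
  apply H; lra.
Qed.

Definition Dd (d : nat -> R) (n : nat) : nat -> R := Nat.iter n (fun a : nat -> R => fun k => a (S k)) d.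

Lemma Dd_val d n k : Dd d n k = d (n + k)%nat.
Proof. revert k; induction n; intro k; simpl; auto. unfold Dd in *; simpl. rewrite IHn. f_equal; lia. Qed.

Lemma Dd_rad d n : CV_radius (Dd d n) = CV_radius d.
Proof. induction n; simpl; auto. rewrite <- IHn. unfold Dd; simpl. apply (CV_radius_decr_1 (Dd d n)). Qed.

Lemma Zlem phi t0 r d sg dl : 0 < r -> Rbar_le (Finite r) (CV_radius d) ->
  (forall t, Rabs (t - t0) < r -> phi t = PSeries d (t - t0)) ->
  (sg = 1 \/ sg = -1) -> 0 < dl ->
  (forall x, 0 < x < dl -> phi (t0 + sg * x) = 0) ->
  forall t, Rabs (t - t0) < r -> phi t = 0.
Proof.
  intros Hr Hd Hphi Hs Hdl Hz.
  set (dl' := Rmin dl r).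
  assert (Hdl' : 0 < dl') by (apply Rmin_glb_lt; auto).
  assert (Hsx : forall x, 0 < x < dl' -> Rabs (sg * x) = x /\ x < r /\ x < dl).
  { intros x Hx. pose proof (Rmin_l dl r); pose proof (Rmin_r dl r). fold dl' in H, H0.
    rewrite Rabs_mult. destruct Hs as [-> | ->]; rewrite ?Rabs_R1, ?Rabs_m1, Rabs_pos_eq; lra. }
  assert (Hrad : forall n, Rbar_le (Finite r) (CV_radius (Dd d n))) by (intro n; rewrite Dd_rad; auto).
  assert (Hin : forall n x, Rabs x < r -> Rbar_lt (Finite (Rabs x)) (CV_radius (Dd d n))).
  { intros n x Hx. eapply Rbar_lt_le_trans; [|apply Hrad]. simpl; auto. }
  assert (Hcl : forall n, (forall x, 0 < x < dl' -> PSeries (Dd d n) (sg * x) = 0) ->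
                 Dd d n 0%nat = 0).
  { intros n Hn. rewrite <- PSeries_0. apply (CZ _ sg dl'); auto.
    apply (ex_derive_continuous (K:=R_AbsRing) (V:=R_NormedModule) (PSeries (Dd d n))).
    apply ex_derive_PSeries, Hin. rewrite Rabs_R0; auto. }
  assert (Hcl2 : forall n, forall x, 0 < x < dl' -> PSeries (Dd d n) (sg * x) = 0).
  { induction n.
    - intros x Hx. destruct (Hsx x Hx) as (H1 & H2 & H3). simpl.
      rewrite <- (Hz x) by lra. rewrite Hphi. f_equal; ring.
      replace (t0 + sg * x - t0) with (sg * x) by ring. lra.
    - intros x Hx. destruct (Hsx x Hx) as (H1 & H2 & H3).
      pose proof (Hcl n IHn) as H0.
      pose proof (PSeries_decr_1 (Dd d n) (sg * x)) as E.
      rewrite IHn in E by auto. rewrite H0 in E.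
      assert (sg * x <> 0) by (intro Hq; rewrite Hq, Rabs_R0 in H1; lra).
      assert (PSeries (PS_decr_1 (Dd d n)) (sg * x) = 0).
      { apply (Rmult_eq_reg_l (sg * x)); auto. rewrite Rmult_0_r. rewrite E; [ring|].
        apply CV_radius_inside, Hin. lra. }
      exact H4. }
  assert (Hd0 : forall n, d n = 0).
  { intro n. rewrite <- (Nat.add_0_r n), <- Dd_val. apply Hcl, Hcl2. }
  intros t Ht. rewrite Hphi by auto. unfold PSeries. apply Series_zero.
  intro k; rewrite Hd0; ring.
Qed.

Lemma RP phi sg a b : (sg = 1 \/ sg = -1) -> (forall t0, LPS phi t0) -> a < b ->
  (forall s, a < s < b -> phi (sg * s) = 0) -> forall t, a < t -> phi (sg * t) = 0.
Proof.
  intros Hs Hl Hab Hz t Ht. apply NNPP; intro Hn.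
  set (E := fun x => a < x /\ forall y, a < y <= x -> phi (sg * y) = 0).
  assert (HE : exists x, E x).
  { exists ((a + b) / 2). split; [lra|]. intros y Hy; apply Hz; lra. }
  assert (Hb : bound E).
  { exists t. intros x [Hx Hy]. destruct (Rle_lt_dec x t); auto.
    exfalso; apply Hn, Hy; lra. }
  destruct (completeness E Hb HE) as [s [Hub Hlub]].
  assert (Hsa : a < s).
  { destruct HE as [x Hx]. pose proof (Hub x Hx). destruct Hx; lra. }
  assert (Z1 : forall y, a < y < s -> phi (sg * y) = 0).
  { intros y Hy. apply NNPP; intro Hny.
    assert (is_upper_bound E y).
    { intros x [Hx Hxy]. destruct (Rle_lt_dec x y); auto.
      exfalso; apply Hny, Hxy; lra. }
    pose proof (Hlub y H). lra. }
  destruct (Hl (sg * s)) as (r & Hr & d & Hd & Hphi).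
  assert (Habs : forall u v, Rabs (sg * u - sg * v) = Rabs (u - v)).
  { intros u v. replace (sg * u - sg * v) with (sg * (u - v)) by ring.
    rewrite Rabs_mult. destruct Hs as [-> | ->]; rewrite ?Rabs_R1, ?Rabs_m1; ring. }
  assert (Hz2 : forall t', Rabs (t' - sg * s) < r -> phi t' = 0).
  { apply (Zlem phi (sg * s) r d (- sg) (s - a)); auto; [destruct Hs; subst; lra|lra|].
    intros x Hx. replace (sg * s + - sg * x) with (sg * (s - x)) by ring. apply Z1; lra. }
  assert (E (s + r / 2)).
  { split; [lra|]. intros y Hy. destruct (Rlt_le_dec y s).
    - apply Z1; lra.
    - apply Hz2. rewrite Habs. rewrite Rabs_pos_eq; lra. }
  pose proof (Hub _ H). lra.
Qed.

Lemma ID1 phi a b : (forall t0, LPS phi t0) -> a < b ->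
  (forall s, a < s < b -> phi s = 0) -> forall t, phi t = 0.
Proof.
  intros Hl Hab Hz t. destruct (Rlt_le_dec a t).
  - rewrite <- (Rmult_1_l t). apply (RP phi 1 a b); auto.
    intros s Hs; rewrite Rmult_1_l; auto.
  - replace t with (-1 * - t) by ring. apply (RP phi (-1) (- b) (- a)); auto; try lra.
    intros s Hs. apply Hz. lra.
Qed.


Fixpoint bz (L : list var) (c : (var -> nat) -> R) : R :=
  match L with
  | nil => c (fun _ => 0%nat)
  | u :: L' => bz L' (fun a => c (mset a u 0))
  end.

Lemma box_zero L : forall c K y, (forall u, In u L -> y u = 0) -> box_sum L K c y = bz L c.
Proof.
  induction L as [|u L IH]; intros c K y H; simpl; auto.
  rewrite sumf_first. simpl. rewrite IH. ring. intros; apply H; simpl; auto.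
  intros e He. rewrite H by (simpl; auto). rewrite pow_i by auto. ring.
Qed.

Lemma box_one v L : NoDup L -> forall c, exists d : nat -> R, forall K y,
  (forall v', v' <> v -> y v' = 0) -> box_sum L K c y = sum_f_R0 (fun e => d e * y v ^ e) K.
Proof.
  induction L as [|u L IH]; intros ND c.
  - exists (fun e => if Nat.eq_dec e 0 then c (fun _ => 0%nat) else 0).
    intros K y H. simpl. rewrite sumf_first. simpl. ring.
    intros e He. destruct (Nat.eq_dec e 0); [lia|ring].
  - inversion ND as [|? ? Hu ND']; subst.
    destruct (var_eq_dec u v) as [<-|ne].
    + exists (fun e => bz L (fun a => c (mset a u e))).
      intros K y H. simpl. apply sum_eq. intros e _. rewrite box_zero. ring.
      intros u' Hu'. apply H. intro; subst; auto.
    + destruct (IH ND' (fun a => c (mset a u 0))) as [d Hd].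
      exists d. intros K y H. simpl. rewrite sumf_first. simpl. rewrite Hd by auto. ring.
      intros e He. rewrite (H u) by auto. rewrite pow_i by auto. ring.
Qed.

Lemma bounded_terms u l : is_lim_seq (fun K => sum_f_R0 u K) (Finite l) ->
  exists M, forall n, Rabs (u n) <= M.
Proof.
  intros H. assert (Hs : ex_series u) by (exists l; apply is_series_of_lim; auto).
  apply ex_series_lim_0 in Hs.
  destruct (proj2 (is_lim_seq_spec u 0) Hs (mkposreal 1 Rlt_0_1)) as [N0 HN].
  exists (1 + sum_f_R0 (fun k => Rabs (u k)) N0). intro n.
  assert (Hp : forall m, 0 <= sum_f_R0 (fun k => Rabs (u k)) m).
  { intro m; apply cond_pos_sum; intro; apply Rabs_pos. }
  destruct (le_lt_dec N0 n).
  - specialize (HN n l0). simpl in HN. rewrite Rminus_0_r in HN. pose proof (Hp N0); lra.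
  - assert (forall m k, (k <= m)%nat -> Rabs (u k) <= sum_f_R0 (fun k => Rabs (u k)) m).
    { induction m; intros k Hk.
      - assert (k = 0%nat) by lia; subst; simpl; lra.
      - simpl. destruct (Nat.eq_dec k (S m)) as [->|ne]. pose proof (Hp m); lra.
        pose proof (IHm k ltac:(lia)); pose proof (Rabs_pos (u (S m))); lra. }
    pose proof (H0 N0 n ltac:(lia)); lra.
Qed.

Definition AxA (g : pt -> R) : Prop := forall w v t0, LPS (fun t => g (upd w v t)) t0.

Lemma analytic_AxA P g : analytic_on P g -> AxA g.
Proof.
  intros (L & ND & _ & Hdep & Hloc) w v t0.
  destruct (Hloc (upd w v t0)) as (r & Hr & c & Hc).
  destruct (box_one v L ND c) as [d Hd].
  assert (Hlim : forall t, Rabs (t - t0) < r ->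
    is_lim_seq (fun K => sum_f_R0 (fun e => d e * (t - t0) ^ e) K) (Finite (g (upd w v t)))).
  { intros t Ht.
    destruct (Hc (upd w v t)) as [Hl _].
    { intros v' _. destruct (var_eq_dec v v') as [<-|ne].
      - rewrite !upd_eq; auto.
      - rewrite !upd_neq by auto. rewrite Rminus_diag, Rabs_R0; auto. }
    eapply is_lim_seq_ext; [|exact Hl]. intro K. simpl. rewrite Hd.
    - rewrite !upd_eq. reflexivity.
    - intros v' ne. rewrite !upd_neq by auto. ring. }
  exists (r / 2). split; [lra|]. exists d. split.
  - destruct (bounded_terms _ _ (Hlim (t0 + r / 2) ltac:(replace (t0 + r / 2 - t0) with (r/2) by ring; rewrite Rabs_pos_eq; lra))) as [M HM].
    destruct (CV_radius_bounded d) as [Hub _].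
    replace (r / 2) with (t0 + r / 2 - t0) by ring.
    apply Hub. exists M. exact HM.
  - intros t Ht. unfold PSeries. symmetry. apply is_series_unique, is_series_of_lim, Hlim. lra.
Qed.

Lemma analytic_dep P g : analytic_on P g ->
  exists L, (forall v, In v L -> P v) /\ dep (fun v => In v L) g.
Proof. intros (L & _ & HP & Hdep & _). exists L; split; auto. Qed.


Lemma LPS_const c t0 : LPS (fun _ => c) t0.
Proof.
  exists 1; split; [lra|]. exists (fun n => if Nat.eq_dec n 0 then c else 0). split.
  - destruct (CV_radius_bounded (fun n => if Nat.eq_dec n 0 then c else 0)) as [Hub _].
    apply Hub. exists (Rabs c). intro n. rewrite pow1, Rmult_1_r.
    destruct (Nat.eq_dec n 0); [lra|rewrite Rabs_R0; apply Rabs_pos].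
  - intros t _. unfold PSeries. rewrite (Series_single _ 0). simpl; ring.
    intros k Hk. destruct (Nat.eq_dec k 0); [lia|ring].
Qed.

Lemma AxA_slice g v t : AxA g -> AxA (fun w => g (upd w v t)).
Proof.
  intros H w u t0. destruct (var_eq_dec u v) as [->|ne].
  - replace (fun s => g (upd (upd w v s) v t)) with (fun _ : R => g (upd w v t)).
    apply LPS_const. apply functional_extensionality; intro s; rewrite upd_upd_same; auto.
  - replace (fun s => g (upd (upd w u s) v t)) with (fun s => g (upd (upd w v t) u s)).
    apply H. apply functional_extensionality; intro s; rewrite upd_comm; auto.
Qed.

Lemma LPS_cont phi t0 : LPS phi t0 -> continuous phi t0.
Proof.
  intro H. apply (ex_derive_continuous (K:=R_AbsRing) (V:=R_NormedModule) phi).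
  apply LPS_ex_derive; auto.
Qed.

Lemma IDL L : forall f g, dep (fun v => In v L) f -> dep (fun v => In v L) g ->
  AxA f -> AxA g -> (forall w, f w * g w = 0) -> (forall w, f w = 0) \/ (forall w, g w = 0).
Proof.
  induction L as [|v L IH]; intros f g Hf Hg Af Ag H0.
  - set (w0 := fun _ : var => 0).
    assert (Ef : forall w, f w = f w0) by (intro w; apply Hf; intros v []).
    assert (Eg : forall w, g w = g w0) by (intro w; apply Hg; intros v []).
    destruct (Rmult_integral _ _ (H0 w0)); [left|right]; intro w; rewrite ?Ef, ?Eg; auto.
  - assert (Hsl : forall (h : pt -> R) t, dep (fun u => In u (v :: L)) h ->
                  dep (fun u => In u L) (fun w => h (upd w v t))).
    { intros h t Hh w w' E. apply Hh. intros u Hu. destruct (var_eq_dec v u) as [<-|ne].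
      - rewrite !upd_eq; auto.
      - rewrite !upd_neq by auto. apply E. destruct Hu; [congruence|auto]. }
    destruct (classic (forall w, f w = 0)) as [Hz|Hn]; [left; auto|right].
    apply not_all_ex_not in Hn. destruct Hn as [q Hq].
    destruct (cont_nz (fun s => f (upd q v s)) (q v)) as (dl & Hdl & Hnz).
    { apply LPS_cont, Af. }
    { rewrite upd_same; auto. }
    assert (Hgs : forall s, Rabs (s - q v) < dl -> forall w, g (upd w v s) = 0).
    { intros s Hs. destruct (IH (fun w => f (upd w v s)) (fun w => g (upd w v s))
        (Hsl f s Hf) (Hsl g s Hg) (AxA_slice f v s Af) (AxA_slice g v s Ag)) as [A|B].
      - intro w; apply H0.
      - exfalso. apply (Hnz s Hs), A.
      - exact B. }
    intro w. rewrite <- (upd_same w v).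
    apply (ID1 (fun s => g (upd w v s)) (q v - dl) (q v + dl)).
    + intro t0; apply Ag.
    + lra.
    + intros s Hs. apply Hgs. apply Rabs_def1; lra.
Qed.


Definition lev (M : nat) (v : var) : Prop :=
  match v with VD _ i => (i < M)%nat | _ => True end.

Lemma dep_plus S a b : dep S a -> dep S b -> dep S (fun w => a w + b w).
Proof. intros Ha Hb w w' E; rewrite (Ha w w'), (Hb w w'); auto. Qed.
Lemma dep_mult S a b : dep S a -> dep S b -> dep S (fun w => a w * b w).
Proof. intros Ha Hb w w' E; rewrite (Ha w w'), (Hb w w'); auto. Qed.
Lemma dep_const S c : dep S (fun _ => c).
Proof. intros w w' _; auto. Qed.
Lemma dep_coord (S : var -> Prop) v : S v -> dep S (fun w => w v).
Proof. intros Hv w w' E; auto. Qed.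

Lemma xpos_dep F j n k : dep (lev 1) (xpos F j k n).
Proof.
  induction k; intros w w' E; simpl.
  - apply E; simpl; lia.
  - rewrite (IHk w w' E), (E VX) by exact Logic.I. f_equal; apply functional_extensionality; intro; apply E; exact Logic.I.
Qed.
Lemma xneg_dep G j n k : dep (lev 1) (xneg G j k n).
Proof.
  induction k; intros w w' E; simpl.
  - apply E; simpl; lia.
  - rewrite (IHk w w' E), (E VX) by exact Logic.I. f_equal; apply functional_extensionality; intro; apply E; exact Logic.I.
Qed.

Lemma series_split a I : (forall i, (I < i)%nat -> a i = 0) ->
  Series a = Series (fun i => if Nat.ltb i I then a i else 0) + a I.
Proof.
  intros H. rewrite (Series_fin a I H), (Series_fin _ I).
  2:{ intros i Hi. destruct (Nat.ltb_spec i I); [lia|auto]. }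
  destruct I as [|I]; simpl. ring.
  rewrite Nat.ltb_irrefl. rewrite (sum_eq (fun i => if Nat.ltb i (S I) then a i else 0) a). ring.
  intros i Hi. destruct (Nat.ltb_spec i (S I)); [auto|lia].
Qed.

Lemma STEP N F G (f : fn) n I : dep (lev (S I)) (f n) ->
  exists B, dep (lev (S I)) B /\ forall w,
    Dx N F G f n w = B w + fsum N (fun j => dpart (f n) (VD j I) w * w (VD j (S I))).
Proof.
  intros Hf.
  exists (fun w => dpart (f n) VX w + fsum N (fun j =>
      Series (fun k => dpart (f n) (VU j (Z.of_nat k)) w * xpos F j k n w +
                       dpart (f n) (VU j (- Z.of_nat (S k))%Z) w * xneg G j (S k) n w) +
      Series (fun i => if Nat.ltb i I then dpart (f n) (VD j i) w * w (VD j (S i)) else 0))).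
  split.
  - apply dep_plus. apply dpart_dep; auto; exact Logic.I.
    apply fsum_dep; intro j. apply dep_plus.
    + apply Series_dep; intro k. apply dep_plus; apply dep_mult.
      * apply dpart_dep; auto; exact Logic.I.
      * apply dep_mono with (lev 1); [apply xpos_dep|]. intros [] ?; simpl in *; auto; lia.
      * apply dpart_dep; auto; exact Logic.I.
      * apply dep_mono with (lev 1); [apply xneg_dep|]. intros [] ?; simpl in *; auto; lia.
    + apply Series_dep; intro i. destruct (Nat.ltb_spec i I).
      * apply dep_mult. apply dpart_dep; auto; simpl; lia. apply dep_coord; simpl; lia.
      * apply dep_const.
  - intro w. unfold Dx. rewrite Rplus_assoc. f_equal. rewrite <- fsum_plus. apply fsum_ext.
    intros j _. rewrite Rplus_assoc. f_equal.
    apply series_split. intros i Hi. rewrite (dpart_indep _ _ _ _ Hf). ring. simpl; lia.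
Qed.

Definition Tl (l : nat) (v : var) : Prop :=
  match v with VD j i => j = l /\ i = 0%nat | _ => True end.

Lemma Ffn_dep F l n : dep (Tl l) (Ffn F l n).
Proof.
  intros w w' E. unfold Ffn. rewrite (E VX), (E (VD l 0)) by (simpl; auto).
  f_equal; apply functional_extensionality; intro; apply E; exact Logic.I.
Qed.

Lemma Tl_lev l M v : Tl l v -> lev (S M) v.
Proof. destruct v; simpl; auto; lia. Qed.

Definition cl F l n w := dpart (Ffn F l n) (VD l 0) w.

Lemma cl_dep F l n M : dep (lev (S M)) (cl F l n).
Proof.
  apply dep_mono with (Tl l); [|apply Tl_lev]. apply dpart_dep. apply Ffn_dep. simpl; auto.
Qed.

Lemma Derive_affine a b x : Derive (fun t => a + b * t) x = b.
Proof. apply is_derive_unique. auto_derive; auto. ring. Qed.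

Lemma STR N F G l n : (l < N)%nat -> forall M, exists A, dep (lev (S M)) A /\
  forall w, Dxn N F G (S M) (Ffn F l) n w = A w + cl F l n w * w (VD l (S M)).
Proof.
  intros Hl. induction M.
  - destruct (STEP N F G (Ffn F l) n 0 (dep_mono _ _ _ (Ffn_dep F l n) (Tl_lev l 0)))
      as (B & HB & EB).
    exists B; split; auto. intro w. simpl. rewrite EB. f_equal.
    rewrite (fsum_single N _ l Hl). reflexivity.
    intros j ne. rewrite (dpart_indep _ _ _ _ (Ffn_dep F l n)). ring. simpl; lia.
  - destruct IHM as (A & HA & EA).
    set (P := fun v => lev (S M) v \/ v = VD l (S M)).
    assert (Hg : dep P (Dxn N F G (S M) (Ffn F l) n)).
    { intros w w' E. rewrite !EA.
      rewrite (HA w w'), (cl_dep F l n M w w'), (E (VD l (S M))); auto;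
        unfold P; auto; intros v Hv; apply E; unfold P; auto. }
    assert (HPl : forall v, P v -> lev (S (S M)) v).
    { unfold P; intros v [Hv| ->]; [destruct v; simpl in *; auto; lia | simpl; lia]. }
    destruct (STEP N F G (Dxn N F G (S M) (Ffn F l)) n (S M) (dep_mono _ _ _ Hg HPl))
      as (B & HB & EB).
    exists B; split; auto. intro w.
    change (Dxn N F G (S (S M)) (Ffn F l) n w) with (Dx N F G (Dxn N F G (S M) (Ffn F l)) n w).
    rewrite EB. f_equal.
    rewrite (fsum_single N _ l Hl).
    + f_equal. unfold dpart.
      rewrite (Derive_ext _ (fun t => A w + cl F l n w * t)). apply Derive_affine.
      intro t. rewrite EA, upd_eq. f_equal; [|f_equal]; [apply HA|apply cl_dep with (M := M)];
        intros v Hv; rewrite upd_neq; auto; intros <-; simpl in Hv; lia.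
    + intros j ne. rewrite (dpart_indep _ _ _ _ Hg). ring.
      unfold P; simpl; intros [H|H]; [lia|congruence].
Qed.


Lemma Ffn_upd F l n w t : Ffn F l n (upd w (VD l 0) t) =
  F l (w VX) n t (fun l' => w (VU l' 0)) (fun l' => w (VU l' 1)).
Proof.
  unfold Ffn. rewrite upd_eq, upd_neq by discriminate. f_equal; apply functional_extensionality;
  intro; rewrite upd_neq; auto; discriminate.
Qed.
Lemma Gfn_upd G l n w t : Gfn G l n (upd w (VD l 0) t) =
  G l (w VX) n t (fun l' => w (VU l' 0)) (fun l' => w (VU l' (-1))).
Proof.
  unfold Gfn. rewrite upd_eq, upd_neq by discriminate. f_equal; apply functional_extensionality;
  intro; rewrite upd_neq; auto; discriminate.
Qed.

Lemma c_nz N F G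
  (HF : forall j, (j < N)%nat -> forall n, analytic_on (dynx_var N) (Ffn F j n))
  (HG : forall j, (j < N)%nat -> forall n, analytic_on (dynx_var N) (Gfn G j n))
  (Hrew : forall j, (j < N)%nat -> forall (x : R) (n : Z) (a b : R) (u v : nat -> R),
      a = F j x (n - 1)%Z b v u <-> b = G j x n a u v)
  l n w : (l < N)%nat -> cl F l n w <> 0.
Proof.
  intros Hl.
  set (phi := fun t => Ffn F l n (upd w (VD l 0) t)).
  set (w0 := fun v => match v with VU l' m => w (VU l' (m + 1)%Z) | _ => w v end).
  set (psi := fun a : R => Gfn G l (n + 1)%Z (upd w0 (VD l 0) a)).
  assert (Inv : forall t, psi (phi t) = t).
  { intro t. unfold psi, phi. rewrite Gfn_upd, Ffn_upd. symmetry.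
    apply (Hrew l Hl (w VX) (n + 1)%Z _ t (fun l' => w (VU l' 1)) (fun l' => w (VU l' 0))).
    rewrite Z.add_simpl_r. reflexivity. }
  set (t1 := w (VD l 0)).
  assert (D1 : ex_derive phi t1) by apply LPS_ex_derive, (analytic_AxA _ _ (HF l Hl n)).
  assert (D2 : ex_derive psi (phi t1)) by apply LPS_ex_derive, (analytic_AxA _ _ (HG l Hl (n + 1)%Z)).
  pose proof (is_derive_comp psi phi t1 _ _ (Derive_correct _ _ D2) (Derive_correct _ _ D1)) as Hc.
  apply is_derive_unique in Hc.
  rewrite (Derive_ext _ id) in Hc by (intro; apply Inv). rewrite Derive_id in Hc.
  change (cl F l n w) with (Derive phi t1). intro H0. rewrite H0 in Hc.
  unfold scal in Hc; simpl in Hc; unfold mult in Hc; simpl in Hc. lra.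
Qed.

Lemma INDEP N F G l n M : (l < N)%nat ->
  dep (fun v => lev M v \/ v = VD l M) (Dxn N F G M (Ffn F l) n).
Proof.
  intros Hl. destruct M as [|M].
  - apply dep_mono with (Tl l); [apply Ffn_dep|].
    intros [] Hv; simpl in *; auto. destruct Hv; subst; auto.
  - destruct (STR N F G l n Hl M) as (A & HA & EA).
    intros w w' E. rewrite !EA. rewrite (HA w w'), (cl_dep F l n M w w'), (E (VD l (S M))); auto;
    intros v Hv; apply E; auto.
Qed.

Lemma dep_lev N F G l n M : (l < N)%nat -> dep (lev (S M)) (Dxn N F G M (Ffn F l) n).
Proof.
  intros Hl. apply dep_mono with (1 := INDEP N F G l n M Hl).
  intros v [Hv| ->]; [destruct v; simpl in *; auto; lia | simpl; lia].
Qed.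

Lemma SOLVE N F G
  (HF : forall j, (j < N)%nat -> forall n, analytic_on (dynx_var N) (Ffn F j n))
  (HG : forall j, (j < N)%nat -> forall n, analytic_on (dynx_var N) (Gfn G j n))
  (Hrew : forall j, (j < N)%nat -> forall (x : R) (n : Z) (a b : R) (u v : nat -> R),
      a = F j x (n - 1)%Z b v u <-> b = G j x n a u v)
  l n M w y : (l < N)%nat -> exists t, Dxn N F G M (Ffn F l) n (upd w (VD l M) t) = y.
Proof.
  intros Hl. destruct M as [|M].
  - exists (G l (w VX) (n + 1)%Z y (fun l' => w (VU l' 1)) (fun l' => w (VU l' 0))).
    simpl. rewrite Ffn_upd. symmetry.
    pose proof (proj2 (Hrew l Hl (w VX) (n + 1)%Z y _ (fun l' => w (VU l' 1)) (fun l' => w (VU l' 0))) eq_refl) as E.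
    rewrite Z.add_simpl_r in E. exact E.
  - destruct (STR N F G l n Hl M) as (A & HA & EA).
    pose proof (c_nz N F G HF HG Hrew l n w Hl) as Hc.
    exists ((y - A w) / cl F l n w). rewrite EA, upd_eq.
    rewrite (HA _ w), (cl_dep F l n M _ w). field; auto.
    all: intros v Hv; rewrite upd_neq; auto; intros <-; simpl in Hv; lia.
Qed.

Lemma ROW N F G
  (HF : forall j, (j < N)%nat -> forall n, analytic_on (dynx_var N) (Ffn F j n))
  (HG : forall j, (j < N)%nat -> forall n, analytic_on (dynx_var N) (Gfn G j n))
  (Hrew : forall j, (j < N)%nat -> forall (x : R) (n : Z) (a b : R) (u v : nat -> R),
      a = F j x (n - 1)%Z b v u <-> b = G j x n a u v)
  n M (p : pt) w : forall K, (K <= N)%nat -> exists w',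
    (forall v, (forall l, (l < K)%nat -> v <> VD l M) -> w' v = w v) /\
    forall l, (l < K)%nat -> Dxn N F G M (Ffn F l) n w' = p (VD l M).
Proof.
  induction K; intros HK.
  - exists w; split; auto. intros; lia.
  - destruct (IHK ltac:(lia)) as (w' & Ew & Hw).
    destruct (SOLVE N F G HF HG Hrew K n M w' (p (VD K M)) ltac:(lia)) as [t Ht].
    exists (upd w' (VD K M) t). split.
    + intros v Hv. rewrite upd_neq. apply Ew. intros l Hl; apply Hv; lia.
      intro E; apply (Hv K); auto.
    + intros l Hl. destruct (Nat.eq_dec l K) as [->|ne]; auto.
      rewrite <- (Hw l) by lia. apply (INDEP N F G l n M ltac:(lia)).
      intros v [Hv| ->].
      * rewrite upd_neq; auto. intros <-; simpl in Hv; lia.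
      * rewrite upd_neq; auto. intro E; injection E; lia.
Qed.

Lemma SURJ N F G
  (HF : forall j, (j < N)%nat -> forall n, analytic_on (dynx_var N) (Ffn F j n))
  (HG : forall j, (j < N)%nat -> forall n, analytic_on (dynx_var N) (Gfn G j n))
  (Hrew : forall j, (j < N)%nat -> forall (x : R) (n : Z) (a b : R) (u v : nat -> R),
      a = F j x (n - 1)%Z b v u <-> b = G j x n a u v)
  n (p : pt) M : exists w, (forall j m, w (VU j m) = p (VU j (m - 1)%Z)) /\
    forall j i, (j < N)%nat -> (i < M)%nat -> Dxn N F G i (Ffn F j) n w = p (VD j i).
Proof.
  induction M.
  - exists (fun v => match v with VU j m => p (VU j (m - 1)%Z) | _ => 0 end). split; auto. intros; lia.
  - destruct IHM as (w & Hu & Hd).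
    destruct (ROW N F G HF HG Hrew n M p w N (le_n N)) as (w' & Ew & Hw).
    exists w'. split.
    + intros j m. rewrite Ew; auto. intros; discriminate.
    + intros j i Hj Hi. destruct (Nat.eq_dec i M) as [->|ne]; [auto|].
      rewrite <- (Hd j i Hj) by lia. apply (dep_lev N F G j n i Hj).
      intros v Hv. apply Ew. intros l Hl E; subst. simpl in Hv; lia.
Qed.

Lemma maxlev (L : list var) : exists M, forall j i, In (VD j i) L -> (i < M)%nat.
Proof.
  induction L as [|v L [M HM]].
  - exists 0%nat; intros j i [].
  - destruct v as [| |j0 i0].
    + exists M; intros j i [H|H]; [discriminate|eauto].
    + exists M; intros j i [H|H]; [discriminate|eauto].
    + exists (S (Nat.max M i0)); intros j i [H|H].
      * injection H; intros; subst; lia.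
      * pose proof (HM j i H); lia.
Qed.

Lemma SURJ_zero N F G
  (HF : forall j, (j < N)%nat -> forall n, analytic_on (dynx_var N) (Ffn F j n))
  (HG : forall j, (j < N)%nat -> forall n, analytic_on (dynx_var N) (Gfn G j n))
  (Hrew : forall j, (j < N)%nat -> forall (x : R) (n : Z) (a b : R) (u v : nat -> R),
      a = F j x (n - 1)%Z b v u <-> b = G j x n a u v)
  n g : dyn_fun N g -> (forall w, g (Sh N F G n w) = 0) -> forall p, g p = 0.
Proof.
  intros Hg H0 p. destruct (analytic_dep _ _ Hg) as (L & HL & Hdep).
  destruct (maxlev L) as [M HM].
  destruct (SURJ N F G HF HG Hrew n p M) as (w & Hu & Hd).
  rewrite <- (H0 w). apply Hdep. intros v Hv. pose proof (HL v Hv) as Hdv.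
  destruct v as [|j m|j i]; simpl in Hdv.
  - contradiction.
  - simpl. rewrite Hu. rewrite Z.add_simpl_r. reflexivity.
  - simpl. rewrite Hd; auto. eapply HM; eauto.
Qed.


Lemma mset_eq a v e : mset a v e v = e.
Proof. unfold mset; destruct (var_eq_dec v v); congruence. Qed.

Lemma sum2 (Y a b : R) K : sum_f_R0 (fun e => Y ^ e * (if Nat.eq_dec e 0 then a else if Nat.eq_dec e 1 then b else 0)) K
  = a + (if Nat.eq_dec K 0 then 0 else Y * b).
Proof.
  induction K; simpl. ring.
  rewrite IHK. destruct K; simpl; ring.
Qed.

Lemma coord_dyn N v : dyn_var N v -> dyn_fun N (fun w => w v).
Proof.
  intros Hv. exists (v :: nil). split; [constructor; [intros []|constructor]|].
  split; [intros u [<-|[]]; auto|]. split; [intros w w' E; apply E; simpl; auto|].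
  intro w. exists 1; split; [lra|].
  exists (fun a => if Nat.eq_dec (a v) 0 then w v else if Nat.eq_dec (a v) 1 then 1 else 0).
  intros w' Hw'. specialize (Hw' v (or_introl eq_refl)).
  assert (E : forall (c : (var -> nat) -> R) K y, box_sum (v :: nil) K c y =
            sum_f_R0 (fun e => y v ^ e * c (mset (fun _ => 0%nat) v e)) K) by reflexivity.
  split.
  - eapply is_lim_seq_ext_loc; [|apply is_lim_seq_const]. exists 1%nat. intros K HK.
    rewrite E. rewrite (sum_eq _ (fun e => (w' v - w v) ^ e * (if Nat.eq_dec e 0 then w v else if Nat.eq_dec e 1 then 1 else 0))).
    rewrite sum2. destruct (Nat.eq_dec K 0); [lia|ring].
    intros e _. rewrite mset_eq. reflexivity.
  - exists (Rabs (w v) + 1). intro K. rewrite E.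
    rewrite (sum_eq _ (fun e => (Rabs (w' v - w v)) ^ e * (if Nat.eq_dec e 0 then Rabs (w v) else if Nat.eq_dec e 1 then 1 else 0))).
    rewrite sum2. destruct (Nat.eq_dec K 0); lra.
    intros e _. rewrite mset_eq. destruct (Nat.eq_dec e 0); [auto|]. destruct (Nat.eq_dec e 1).
    rewrite Rabs_R1; auto. rewrite Rabs_R0; auto.
Qed.

Lemma dcoordU j m j' k w : dpart (fun w => w (VU j m)) (VU j' k) w =
  if Nat.eq_dec j' j then (if Z.eq_dec k m then 1 else 0) else 0.
Proof.
  rewrite dpart_coord. destruct (var_eq_dec (VU j' k) (VU j m)) as [E|E].
  - injection E; intros; subst. destruct (Nat.eq_dec j j); [|congruence]. destruct (Z.eq_dec m m); congruence.
  - destruct (Nat.eq_dec j' j); auto. destruct (Z.eq_dec k m); auto. subst; congruence.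
Qed.

Lemma Kop_coord N alpha j m n w : (j < N)%nat ->
  Kop N alpha (fun _ w => w (VU j m)) n w = if Z.eq_dec m 0 then 0 else alpha j m w.
Proof.
  intros Hj. unfold Kop. rewrite (fsum_single N _ j Hj).
  2:{ intros j' ne. apply Series_zero. intro k. rewrite !dcoordU.
      destruct (Nat.eq_dec j' j); [congruence|ring]. }
  rewrite (Series_ext _ (fun k => alpha j (Z.of_nat (S k)) w * (if Z.eq_dec (Z.of_nat (S k)) m then 1 else 0)
                + alpha j (- Z.of_nat (S k))%Z w * (if Z.eq_dec (- Z.of_nat (S k))%Z m then 1 else 0))).
  2:{ intro k. rewrite !dcoordU. destruct (Nat.eq_dec j j); [reflexivity|congruence]. }
  destruct (Z.eq_dec m 0) as [->|nz].
  - apply Series_zero. intro k. destruct (Z.eq_dec (Z.of_nat (S k)) 0); [lia|].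
    destruct (Z.eq_dec (- Z.of_nat (S k)) 0); [lia|]. ring.
  - destruct (Z_lt_le_dec 0 m).
    + rewrite (Series_single _ (Z.to_nat m - 1)).
      * destruct (Z.eq_dec (Z.of_nat (S (Z.to_nat m - 1))) m); [|lia].
        destruct (Z.eq_dec (- Z.of_nat (S (Z.to_nat m - 1))) m); [lia|]. rewrite e; ring.
      * intros k Hk. destruct (Z.eq_dec (Z.of_nat (S k)) m); [lia|].
        destruct (Z.eq_dec (- Z.of_nat (S k)) m); [lia|]. ring.
    + rewrite (Series_single _ (Z.to_nat (- m) - 1)).
      * destruct (Z.eq_dec (Z.of_nat (S (Z.to_nat (- m) - 1))) m); [lia|].
        destruct (Z.eq_dec (- Z.of_nat (S (Z.to_nat (- m) - 1))) m); [|lia]. rewrite e; ring.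
      * intros k Hk. destruct (Z.eq_dec (Z.of_nat (S k)) m); [lia|].
        destruct (Z.eq_dec (- Z.of_nat (S k)) m); [lia|]. ring.
Qed.


Lemma IDL2 N f g : dyn_fun N f -> dyn_fun N g -> (forall w, f w * g w = 0) ->
  (forall w, f w = 0) \/ (forall w, g w = 0).
Proof.
  intros Hf Hg H.
  destruct (analytic_dep _ _ Hf) as (Lf & _ & Df).
  destruct (analytic_dep _ _ Hg) as (Lg & _ & Dg).
  apply (IDL (Lf ++ Lg)); auto.
  - apply dep_mono with (1 := Df). intros; apply in_or_app; auto.
  - apply dep_mono with (1 := Dg). intros; apply in_or_app; auto.
  - apply (analytic_AxA _ _ Hf).
  - apply (analytic_AxA _ _ Hg).
Qed.

Theorem lemma2 (N : nat) (F G : Ftype)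
  (HF : forall j, (j < N)%nat -> forall n, analytic_on (dynx_var N) (Ffn F j n))
  (HG : forall j, (j < N)%nat -> forall n, analytic_on (dynx_var N) (Gfn G j n))
  (Hrew : forall j, (j < N)%nat -> forall (x : R) (n : Z) (a b : R) (u v : nat -> R),
      a = F j x (n - 1)%Z b v u <-> b = G j x n a u v)
  (alpha : nat -> Z -> pt -> R)
  (Halpha : forall j m, (j < N)%nat -> m <> 0%Z -> dyn_fun N (alpha j m))
  (h : pt -> R) (Hh : dyn_fun N h)
  (Hconj : forall f, dyn_fun N f -> forall (n : Z) (w : pt),
      Dn N F G (Kop N alpha (Dninv N F G (lift f))) n w = h w * Kop N alpha (lift f) n w) :
  forall j m, (j < N)%nat -> m <> 0%Z -> forall w, alpha j m w = 0.
Proof.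
  intros j m Hj Hm.
  assert (REL : forall m w, (if Z.eq_dec (m - 1) 0 then 0 else alpha j (m - 1)%Z (Sh N F G 0 w))
                 = h w * (if Z.eq_dec m 0 then 0 else alpha j m w)).
  { intros m0 w. pose proof (Hconj (fun w => w (VU j m0)) (coord_dyn N (VU j m0) Hj) 0%Z w) as H.
    unfold Dn in H.
    change (Kop N alpha (Dninv N F G (lift (fun w => w (VU j m0)))) (0 + 1)%Z (Sh N F G 0 w))
      with (Kop N alpha (fun _ w => w (VU j (m0 - 1)%Z)) (0 + 1)%Z (Sh N F G 0 w)) in H.
    change (Kop N alpha (lift (fun w => w (VU j m0))) 0%Z w)
      with (Kop N alpha (fun _ w => w (VU j m0)) 0%Z w) in H.
    rewrite !Kop_coord in H by auto. exact H. }
  assert (SZ : forall k, k <> 0%Z -> (forall w, alpha j k (Sh N F G 0 w) = 0) -> forall w, alpha j k w = 0).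
  { intros k Hk H. apply (SURJ_zero N F G HF HG Hrew 0%Z); auto. }
  assert (RN : forall k w, alpha j (- Z.of_nat (S k))%Z (Sh N F G 0 w)
                = h w * (if Z.eq_dec (- Z.of_nat k) 0 then 0 else alpha j (- Z.of_nat k)%Z w)).
  { intros k w. pose proof (REL (- Z.of_nat k)%Z w) as R.
    replace (- Z.of_nat k - 1)%Z with (- Z.of_nat (S k))%Z in R by lia.
    destruct (Z.eq_dec (- Z.of_nat (S k))%Z 0) as [e|_]; [lia|]. exact R. }
  assert (NEG : forall k w, alpha j (- Z.of_nat (S k))%Z w = 0).
  { induction k as [|k IHk]; apply SZ; try lia; intro w; rewrite RN.
    - destruct (Z.eq_dec (- Z.of_nat 0) 0); [ring|lia].
    - rewrite IHk. destruct (Z.eq_dec _ 0); ring. }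
  assert (POS : forall k w, alpha j (Z.of_nat (S k)) w = 0).
  { destruct (classic (forall w, h w = 0)) as [H0|Hn].
    - intros k. apply SZ; [lia|]. intro w. pose proof (REL (Z.of_nat (S k) + 1)%Z w) as R.
      replace (Z.of_nat (S k) + 1 - 1)%Z with (Z.of_nat (S k)) in R by lia.
      destruct (Z.eq_dec (Z.of_nat (S k)) 0); [lia|]. rewrite R, H0; ring.
    - assert (Hnot : ~ (forall w, h w = 0)) by exact Hn.
      induction k.
      + destruct (IDL2 N h (alpha j (Z.of_nat 1)) Hh (Halpha j (Z.of_nat 1) Hj ltac:(lia))) as [A|B]; auto.
        * intro w. pose proof (REL 1%Z w) as R. destruct (Z.eq_dec (1 - 1) 0); [|lia].
          destruct (Z.eq_dec 1 0); [lia|]. change (Z.of_nat 1) with 1%Z. lra.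
        * contradiction.
      + destruct (IDL2 N h (alpha j (Z.of_nat (S (S k)))) Hh (Halpha j (Z.of_nat (S (S k))) Hj ltac:(lia))) as [A|B]; auto.
        * intro w. pose proof (REL (Z.of_nat (S (S k))) w) as R.
          replace (Z.of_nat (S (S k)) - 1)%Z with (Z.of_nat (S k)) in R by lia.
          destruct (Z.eq_dec (Z.of_nat (S k)) 0); [lia|].
          destruct (Z.eq_dec (Z.of_nat (S (S k))) 0); [lia|].
          rewrite IHk in R. lra.
        * contradiction. }
  intro w. destruct (Z_lt_le_dec 0 m).
  - replace m with (Z.of_nat (S (Z.to_nat m - 1))) by lia. apply POS.
  - replace m with (- Z.of_nat (S (Z.to_nat (- m) - 1)))%Z by lia. apply NEG.
Qed.
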